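(* Let $G$ be a connected graph with minimum degree at least three. Suppose $G$ contains two distinct vertices $v,v'$ joined by exactly two parallel edges $a,b$, such that each of $v,v'$ has degree exactly $3$, its third edge going to a vertex outside $\{v,v'\}$. (Such $v$ is called a $\beta$-vertex.) If $G-v$ is connected, then $\gamma_M(G-v)=\gamma_M(G)-1$; that is, $v$ is a 1-critical-vertex of $G$.
   Context: Graphs may have multiple edges. $\gamma_M(H)$ is the maximum genus of a connected graph $H$ (largest $k$ such that $H$ embeds cellularly in the orientable surface of genus $k$). A vertex $v$ of $G$ is a 1-critical-vertex if $G-v$ is connected and $\gamma_M(G-v)=\gamma_M(G)-1$. *)

(* Defs.v *)
From HB Require Import structures.
From mathcomp Require Import all_boot all_order all_fingroup.
Set Implicit Arguments. Unset Strict Implicit. Unset Printing Implicit Defensive.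

(* A finite multigraph (multiple edges and loops allowed) is given by a
   finite vertex type V, a finite edge type E and an endpoint map
   ends : E -> V * V. *)
Section MultiGraph.
Variables (V E : finType) (ends : E -> V * V).

Definition dart := (E * bool)%type.

Definition dvert (d : dart) : V :=
  if d.2 then (ends d.1).2 else (ends d.1).1.

Definition drev (d : dart) : dart := (d.1, ~~ d.2).

Lemma drev_inj : injective drev.
Proof. by case=> e b [e' b'] [-> /negbRL]; rewrite negbK => ->. Qed.

Definition drev_perm : {perm dart} := perm drev_inj.

(* degree = number of darts at x (a loop counts twice) *)
Definition degree (x : V) : nat := #|[set d : dart | dvert d == x]|.

Definition adjacent (x y : V) : bool :=
  [exists e, (ends e == (x, y)) || (ends e == (y, x))].

Definition connected_graph : Prop := forall x y : V, connect adjacent x y.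

Definition edge_between (e : E) (x y : V) : bool :=
  (ends e == (x, y)) || (ends e == (y, x)).

Definition is_rotation (s : {perm dart}) : bool :=
  [forall d, dvert (s d) == dvert d] &&
  [forall d, forall d', (dvert d == dvert d') ==> (d' \in porbit s d)].

(* Faces of the cellular embedding determined by s: orbits of the face
   permutation (composition of s with the dart reversal).  The edgeless
   (one-vertex) graph has one face. *)
Definition nfaces (s : {perm dart}) : nat :=
  #|porbits (drev_perm * s)| + (#|{: dart}| == 0%N).

(* Euler's formula V - E + F = 2 - 2g for the orientable embedding. *)
Definition emb_genus (s : {perm dart}) : nat :=
  ((#|E| + 2) - (#|V| + nfaces s))./2.

Definition max_genus : nat := \max_(s : {perm dart} | is_rotation s) emb_genus s.

End MultiGraph.

Section Deletion.
Variables (V E : finType) (ends : E -> V * V) (v : V).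

Definition del_V := {x : V | x != v}.
Definition del_E := {e : E | ((ends e).1 != v) && ((ends e).2 != v)}.

Definition del_ends (e : del_E) : del_V * del_V :=
  let P := valP e in
  (exist _ (ends (val e)).1 (proj1 (andP P)),
   exist _ (ends (val e)).2 (proj2 (andP P))).

End Deletion.
Arguments del_ends {V E} ends v e.

(* Main.v *)
Require Import Defs.
From mathcomp Require Import all_boot all_order all_fingroup zify.
Set Implicit Arguments. Unset Strict Implicit. Unset Printing Implicit Defensive.
Set Warnings "-notation-overridden".
Section PermLemmas.
Variable T : finType.
Implicit Types (s t : {perm T}) (x y z w : T).

Lemma porbit_closed s (A : {set T}) z :
  z \in A -> (forall w, w \in A -> s w \in A) -> porbit s z \subset A.
Proof.
move=> zA cl; apply/subsetP=> w /porbitP [i ->].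
elim: i => [|i IH]; first by rewrite expg0 perm1.
by rewrite expgSr permM; apply: cl.
Qed.

Lemma porbit_step s z : s z \in porbit s z.
Proof. by have := mem_porbit s 1 z; rewrite expg1. Qed.

Lemma porbit_trans s x y z :
  y \in porbit s x -> z \in porbit s y -> z \in porbit s x.
Proof. by rewrite -eq_porbit_mem => /eqP ->. Qed.

Lemma porbit_sub_of s t :
  (forall w, s w \in porbit t w) -> forall z, porbit s z \subset porbit t z.
Proof.
move=> H z; apply: porbit_closed; first exact: porbit_id.
by move=> w wz; apply: porbit_trans wz _; apply: H.
Qed.

Lemma porbit_fixed s x y : s x = x -> y \in porbit s x -> y = x.
Proof.
move=> sx; have: porbit s x \subset [set x].
  by apply: porbit_closed; rewrite ?inE // => w /set1P ->; rewrite sx inE.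
by move/subsetP=> H /H /set1P.
Qed.

Lemma count_merge s x y : x \notin porbit s y ->
  (#|porbits (tperm x y * s)|).+1 = #|porbits s|.
Proof.
move=> nxy; have := porbits_mul_tperm s x y; rewrite /= nxy.
have -> : x != y by apply: contraNneq nxy => ->; exact: porbit_id.
by rewrite /= addn1 addn2 => -[].
Qed.

Lemma count_le s x y : #|porbits (tperm x y * s)| <= (#|porbits s|).+1.
Proof.
have := porbits_mul_tperm s x y => /= E.
have : #|porbits (tperm x y * s)| <= #|porbits (tperm x y * s)| + (x \notin porbit s y).*2 by apply: leq_addr.
rewrite E; case: (x != y) => /= H; apply: (leq_trans H); rewrite ?addn1 ?addn0 //.
Qed.

Lemma count_ins s x y : s x = x -> x != y ->
  (#|porbits (tperm x y * s)|).+1 = #|porbits s|.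
Proof.
move=> sx nxy; apply: count_merge; rewrite porbit_sym; apply/negP => /(porbit_fixed sx) /eqP.
by rewrite eq_sym (negbTE nxy).
Qed.

Lemma merge_orbit s x y : x \notin porbit s y -> y \in porbit (tperm x y * s) x.
Proof.
move=> nxy; apply/negPn/negP => H.
have := count_merge nxy; rewrite porbit_sym in H.
by have := count_merge H; rewrite tpermKg => <- /eqP; rewrite -addn2 -{2}[#|_|]addn0 eqn_add2l.
Qed.

Lemma tperm_sub s x y z :
  x \in porbit (tperm x y * s) z -> y \in porbit (tperm x y * s) z ->
  porbit s z \subset porbit (tperm x y * s) z.
Proof.
move=> xz yz; apply: porbit_closed; first exact: porbit_id.
move=> w wz; have -> : s w = (tperm x y * s)%g (tperm x y w) by rewrite permM tpermK.
have: tperm x y w \in porbit (tperm x y * s)%g z by case: tpermP => // ->.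
move=> H; apply: porbit_trans H _; exact: porbit_step.
Qed.

Lemma ins_orbit s x y z w : s x = x -> w \in porbit s z -> w \in porbit (tperm x y * s) z.
Proof.
move=> sx; apply/subsetP; apply: porbit_sub_of => w0.
have -> : s w0 = (tperm x y * s)%g (tperm x y w0) by rewrite permM tpermK.
case: (tpermP x y w0) => [->|->|_ _]; last exact: porbit_step.
- by rewrite permM tpermR sx porbit_id.
- have e : (tperm x y * s)%g y = x by rewrite permM tpermR sx.
  by apply: porbit_trans (porbit_step _ y) _; rewrite e porbit_step.
Qed.

Lemma del_orbit s x y z w : s y = x -> z != x -> w != x ->
  w \in porbit s z -> w \in porbit (tperm x y * s) z.
Proof.
move=> syx nzx nwx; have [<-|nxy] := eqVneq x y; first by rewrite tperm1 mul1g.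
set s' := (tperm x y * s)%g.
have s'x : s' x = x by rewrite permM tpermL syx.
have ss : forall u, s u = s' (tperm x y u) by move=> u; rewrite permM tpermK.
have xnz : x \notin porbit s' z.
  by apply/negP; rewrite porbit_sym => /(porbit_fixed s'x) /eqP; rewrite (negbTE nzx).
case: (boolP (y \in porbit s' z)) => yz.
  have: porbit s z \subset x |: porbit s' z.
    apply: porbit_closed; first by rewrite !inE porbit_id orbT.
    move=> u; rewrite ss; case: (tpermP x y u) => [->|->|_ _].
    - by rewrite !inE (porbit_trans yz (porbit_step _ _)) orbT.
    - by rewrite s'x !inE eqxx.
    - case/setU1P=> [->|uz]; first by rewrite s'x !inE eqxx.
      by rewrite !inE (porbit_trans uz (porbit_step _ _)) orbT.
  by move/subsetP=> H /H; rewrite !inE (negbTE nwx).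
have: porbit s z \subset porbit s' z.
  apply: porbit_closed; first exact: porbit_id.
  move=> u uz; rewrite ss; case: (tpermP x y u) => [eux|euy|_ _].
  - by rewrite -eux uz in xnz.
  - by rewrite -euy uz in yz.
  - exact: porbit_trans uz (porbit_step _ _).
by move/subsetP; apply.
Qed.

End PermLemmas.
Section Euler.
Variables (V E : finType) (ends : E -> V * V).
Local Notation dv := (dvert ends).
Local Notation T := (dart E).

Lemma rotP (s : {perm T}) : is_rotation ends s ->
  (forall d, dv (s d) = dv d) /\ (forall d d', dv d = dv d' -> d' \in porbit s d).
Proof.
case/andP=> /forallP H1 /forallP H2; split=> [d|d d' e]; first exact/eqP.
by have /forallP/(_ d') := H2 d; rewrite e eqxx.
Qed.

Lemma rot_porbit (s : {perm T}) z : is_rotation ends s ->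
  porbit s z = [set w | dv w == dv z].
Proof.
case/rotP=> H1 H2; apply/setP=> w; apply/idP/idP.
  have: porbit s z \subset [set w | dv w == dv z].
    by apply: porbit_closed; rewrite ?inE // => u; rewrite !inE H1.
  by move/subsetP; apply.
by rewrite inE => /eqP e; apply: H2.
Qed.

Lemma rot_count (s : {perm T}) : is_rotation ends s -> #|porbits s| <= #|V|.
Proof.
move=> rs; have -> : porbits s = (fun x => [set w | dv w == x]) @: (dv @: [set: T]).
  apply/setP=> X; apply/imsetP/imsetP=> [[z _ ->]|[x /imsetP[z _ ->] ->]].
    by exists (dv z); rewrite ?imset_f // rot_porbit.
  by exists z; rewrite // rot_porbit.
by apply: leq_trans (leq_imset_card _ _) _; apply: max_card.
Qed.

Definition tedge (e : E) : {perm T} := tperm (e, false) (e, true).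

Definition Ffold (s : {perm T}) (l : seq E) :=
  foldr (fun e acc => (tedge e * acc)%g) s l.

Lemma tedge_val e z : tedge e z = if z.1 == e then drev z else z.
Proof.
case: z => e' bb /=; rewrite /tedge; have [->|ne] := eqVneq e' e.
  by case: bb; rewrite ?tpermL ?tpermR.
by rewrite tpermD // -pair_eqE /= negb_and ?ne // eq_sym ne.
Qed.

Lemma Ffold_val s l z : uniq l -> Ffold s l z = s (if z.1 \in l then drev z else z).
Proof.
elim: l z => [|e l IH] z /=; first by [].
case/andP=> nel ul; rewrite permM IH // tedge_val in_cons.
have [ez|nez] := eqVneq z.1 e; last by rewrite /=.
by rewrite /= ez (negbTE nel) /=.
Qed.

Lemma Ffold_count s l : #|porbits (Ffold s l)| <= #|porbits s| + size l.
Proof.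
elim: l => [|e l IH] /=; first by rewrite addn0.
by apply: leq_trans (count_le _ _ _) _; rewrite addnS ltnS.
Qed.

Lemma dart_at_end (e : E) (x : V) : ((ends e).1 == x) || ((ends e).2 == x) ->
  dv (e, (ends e).1 != x) = x.
Proof. by rewrite /dvert /=; case: eqP => [->|_] //= /eqP. Qed.

Lemma tree_step (s : {perm T}) : connected_graph ends -> is_rotation ends s ->
  forall n, n < #|V| -> exists (C : {set V}) (l : seq E),
  [/\ #|C| = n.+1, uniq l, size l = n,
      (forall e, e \in l -> ((ends e).1 \in C) && ((ends e).2 \in C)) &
      #|porbits (Ffold s l)| + n = #|porbits s|].
Proof.
move=> conn rs; case/rotP: (rs) => H1 H2.
elim=> [|n IH] ltn.
  have [x _] : {x : V | true} by case: (pickP [pred x : V | true]) => [x|/eq_card0 h]; [exists x | move: ltn; rewrite h].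
  by exists [set x], [::]; split; rewrite ?cards1 ?addn0.
have [C [l [cC ul sl lC cnt]]] := IH (ltnW ltn).
case: (boolP [exists e, ((ends e).1 \in C) != ((ends e).2 \in C)]); last first.
  move=> /existsPn ncr; exfalso.
  have [x xC] : exists x, x \in C by apply/set0Pn; rewrite -card_gt0 cC.
  have [y yC] : exists y, y \notin C.
    apply/existsP; apply: contraLR ltn; rewrite negb_exists => /forallP h.
    rewrite -leqNgt -cC subset_leq_card //; apply/subsetP => y _; have := h y; by rewrite negbK.
  have cl : closed (adjacent ends) (mem C).
    move=> x1 y1 /existsP[e he]; have := ncr e; rewrite negbK => /eqP h.
    by case/orP: he => /eqP he; rewrite he /= in h; [exact: h | exact: esym h].
  by have := closed_connect cl (conn x y); rewrite xC (negbTE yC).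
case/existsP=> e cr.
pose bb := ((ends e).1 \notin C).
pose dx : T := (e, bb); pose dy : T := drev dx.
have dxC : dv dx \in C.
  rewrite /dx /dvert /= /bb; case h1: ((ends e).1 \in C) cr => /=; first by rewrite h1.
  by case: ((ends e).2 \in C).
have dyC : dv dy \notin C.
  rewrite /dy /dx /dvert /= /bb; case h1: ((ends e).1 \in C) cr => /=; last by rewrite h1.
  by case: ((ends e).2 \in C).
have nel : e \notin l.
  apply/negP=> /lC /andP[h1 h2]; move: dyC; rewrite /dv /dvert /=.
  by case: (~~ bb); rewrite ?h1 ?h2.
have off : forall w, dv w \notin C -> Ffold s l w = s w.
  move=> w wC; rewrite Ffold_val //; case: ifP => // /lC /andP[h1 h2].
  by move: wC; rewrite /dv /dvert; case: (w.2); rewrite ?h1 ?h2.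
have nm : dx \notin porbit (Ffold s l) dy.
  have: porbit (Ffold s l) dy \subset [set w | dv w == dv dy].
    apply: porbit_closed; rewrite ?inE // => w; rewrite !inE => /eqP ew.
    by rewrite off ?H1 ?ew.
  move/subsetP=> h; apply/negP=> /h; rewrite inE => /eqP ex.
  by move: dyC; rewrite -ex dxC.
exists (dv dy |: C), (e :: l); split.
- by rewrite cardsU1 dyC cC.
- by rewrite /= nel ul.
- by rewrite /= sl.
- move=> e'; rewrite in_cons => /orP[/eqP ->|/lC /andP[h1 h2]]; last by rewrite !inE h1 h2 !orbT.
  move: dxC; rewrite /dy /dv /dvert /= /bb.
  by case: ((ends e).1 \in C) => /= h; rewrite !inE ?h ?eqxx ?orbT.
- have te : tedge e = tperm dx dy by rewrite /tedge /dy /dx /drev /=; case: (bb); rewrite // tpermC.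
  by rewrite /= te -cnt -(count_merge nm) addnS.
Qed.

Lemma euler_le (s : {perm T}) : connected_graph ends -> is_rotation ends s -> 0 < #|V| ->
  #|porbits (drev_perm E * s)| + #|V| <= #|E| + 2.
Proof.
move=> conn rs V0.
have lt : #|V|.-1 < #|V| by rewrite ltn_predL.
have [C [l [cC ul sl lC cnt]]] := tree_step conn rs lt.
pose r := [seq e <- enum E | e \notin l].
have ur : uniq (r ++ l).
  rewrite cat_uniq ul filter_uniq ?enum_uniq //= andbT; apply/hasPn => e.
  by rewrite /r mem_filter => ->.
have allin : forall e, e \in r ++ l by move=> e; rewrite mem_cat /r mem_filter mem_enum andbT; case: (e \in l).
have sz : size r + size l = #|E|.
  rewrite -size_cat cardE; apply: perm_size; apply: uniq_perm => //; first exact: enum_uniq.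
  by move=> e; rewrite allin mem_enum.
have eqF : (drev_perm E * s)%g = Ffold (Ffold s l) r.
  apply/permP => z; rewrite permM /drev_perm permE.
  have := Ffold_val s z ur; rewrite allin /Ffold foldr_cat => <- //.
have c1 := rot_count rs.
have c2 := Ffold_count (Ffold s l) r.
rewrite eqF; rewrite sl in sz.
have hp := prednK V0; clearbody r; clear -c1 c2 sz cnt hp; move: c1 c2 sz cnt hp.
move: (#|V|.-1) => w; move: (#|V|) (#|E|) (size r) (#|porbits s|).
by move: (#|porbits (Ffold s l)|) (#|porbits (Ffold (Ffold s l) r)|); lia.
Qed.
End Euler.
Lemma fconnect_porbit (T : finType) (s : {perm T}) x y : fconnect s x y -> y \in porbit s x.
Proof.
case/connectP => q; elim: q x => [|z q IH] x /=; first by move=> _ ->; exact: porbit_id.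
case/andP => /eqP <- pq ey; exact: porbit_trans (porbit_step s x) (IH _ pq ey).
Qed.

Section Exist.
Variables (V E : finType) (ends : E -> V * V).
Local Notation dv := (dvert ends).
Local Notation T := (dart E).

Definition fib (x : V) : seq T := enum [set w : T | dv w == x].
Definition sfun (z : T) : T := next (fib (dv z)) z.

Lemma fib_uniq x : uniq (fib x). Proof. exact: enum_uniq. Qed.
Lemma mem_fib x z : (z \in fib x) = (dv z == x).
Proof. by rewrite /fib mem_enum inE. Qed.

Lemma sfun_dv z : dv (sfun z) = dv z.
Proof. by apply/eqP; rewrite -mem_fib /sfun mem_next mem_fib. Qed.

Lemma sfun_inj : injective sfun.
Proof.
move=> z z' e; have ed : dv z = dv z' by rewrite -sfun_dv e sfun_dv.
by move: e; rewrite /sfun ed => /(can_inj (prev_next (fib_uniq _))).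
Qed.

Lemma rot_exists : exists s : {perm T}, is_rotation ends s.
Proof.
exists (perm sfun_inj); apply/andP; split; apply/forallP => d; first by rewrite permE sfun_dv.
apply/forallP => d'; apply/implyP => /eqP ed; apply: fconnect_porbit.
have fc : fcycle (perm sfun_inj) (fib (dv d)).
  have := cycle_next (fib_uniq (dv d)); rewrite (@eq_in_cycle _ [pred w | dv w == dv d] _ (frel (perm sfun_inj))) //.
    by move=> x y; rewrite !inE => /eqP ex _ /=; rewrite permE /sfun ex.
  by apply/allP => w; rewrite mem_fib.
by rewrite (fconnect_cycle fc) ?mem_fib ?ed.
Qed.
End Exist.
Section Ext.
Variables (T T' : finType) (j : T' -> T) (k : T -> option T').
Hypotheses (jK : pcancel j k) (kK : forall z x, k z = Some x -> j x = z).

Lemma j_inj : injective j. Proof. exact: pcan_inj jK. Qed.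

Definition ext_fun (Q : {perm T'}) (z : T) : T :=
  if k z is Some x then j (Q x) else z.

Lemma ext_inj Q : injective (ext_fun Q).
Proof.
move=> z z'; rewrite /ext_fun.
case ez: (k z) => [x|]; case ez': (k z') => [x'|].
- by move/j_inj/perm_inj => exx; rewrite -(kK ez) -(kK ez') exx.
- by move=> e; move: ez'; rewrite -e jK.
- by move=> e; move: ez; rewrite e jK.
- by [].
Qed.

Definition ext (Q : {perm T'}) : {perm T} := perm (@ext_inj Q).

Lemma extE_j Q x : ext Q (j x) = j (Q x).
Proof. by rewrite permE /ext_fun jK. Qed.

Lemma extE_N Q z : k z = None -> ext Q z = z.
Proof. by rewrite permE /ext_fun => ->. Qed.

Lemma ext_exp Q i x : (ext Q ^+ i)%g (j x) = j ((Q ^+ i)%g x).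
Proof.
elim: i => [|i IH]; first by rewrite !expg0 !perm1.
by rewrite !expgSr !permM IH extE_j.
Qed.

Lemma porbit_ext Q x y : (j y \in porbit (ext Q) (j x)) = (y \in porbit Q x).
Proof.
apply/porbitP/porbitP => [[i]|[i ->]]; last by exists i; rewrite ext_exp.
by rewrite ext_exp => /j_inj ->; exists i.
Qed.

Lemma porbit_extN Q z : k z = None -> porbit (ext Q) z = [set z].
Proof.
move=> kz; apply/setP=> w; rewrite inE; apply/idP/eqP => [|->]; last exact: porbit_id.
exact: porbit_fixed (extE_N Q kz).
Qed.

Lemma porbit_extj Q x : porbit (ext Q) (j x) = j @: porbit Q x.
Proof.
apply/setP=> w; apply/idP/imsetP => [wx|[y yx ->]]; last by rewrite porbit_ext.
case ew: (k w) => [y|].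
  by exists y; rewrite -?porbit_ext (kK ew).
move: wx; rewrite porbit_sym porbit_extN // inE => /eqP ex.
by move: ew; rewrite -ex jK.
Qed.

Lemma ext_count Q : #|porbits (ext Q)| = #|porbits Q| + #|[set z | k z == None]|.
Proof.
have -> : porbits (ext Q) = (fun X : {set T'} => j @: X) @: porbits Q :|: (fun z : T => [set z]) @: [set z | k z == None].
  apply/setP => X; rewrite inE; apply/imsetP/orP.
    move=> [z _ ->]; case ez: (k z) => [x|].
      by left; apply/imsetP; exists (porbit Q x); [exact: imset_f | rewrite -(kK ez) porbit_extj].
    by right; apply/imsetP; exists z; rewrite ?inE ?ez // porbit_extN.
  case=> /imsetP [].
    by move=> Y /imsetP[x _ ->] ->; exists (j x) => //; rewrite porbit_extj.
  by move=> z; rewrite inE => /eqP ez ->; exists z => //; rewrite porbit_extN.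
rewrite cardsU.
have -> : (fun X : {set T'} => j @: X) @: porbits Q :&: (fun z : T => [set z]) @: [set z | k z == None] = set0.
  apply/setP=> X; rewrite !inE; apply/andP => -[/imsetP[Y /imsetP[x _ ->] ->] /imsetP[z]].
  rewrite inE => /eqP ez e; have : j x \in [set z] by rewrite -e imset_f // porbit_id.
  by rewrite inE => /eqP ejz; move: ez; rewrite -ejz jK.
have inj1 : injective (fun X : {set T'} => j @: X).
  move=> X Y e; apply/setP=> w; apply/idP/idP => h.
    have : j w \in j @: Y by rewrite -e imset_f.
    by case/imsetP=> w' h' /j_inj ->.
  have : j w \in j @: X by rewrite e imset_f.
  by case/imsetP=> w' h' /j_inj ->.
have inj2 : injective (fun z : T => [set z]).
  by move=> z z' /setP/(_ z); rewrite !inE eqxx => /esym/eqP.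
by rewrite cards0 subn0 (card_imset _ inj1) (card_imset _ inj2).
Qed.

Definition restrict_fun (s : {perm T}) (x : T') : T' :=
  if k (s (j x)) is Some y then y else x.

Variable (s : {perm T}) (Hs : forall x, k (s (j x)) != None).

Lemma restrict_spec x : j (restrict_fun s x) = s (j x).
Proof.
have := Hs x; rewrite /restrict_fun; case e: (k _) => [y|] // _; exact: kK e.
Qed.

Lemma restrict_inj : injective (restrict_fun s).
Proof. by move=> x y e; apply/j_inj/(@perm_inj _ s); rewrite -!restrict_spec e. Qed.

Definition restrict : {perm T'} := perm restrict_inj.

Lemma restrictE x : j (restrict x) = s (j x).
Proof. by rewrite permE restrict_spec. Qed.

Lemma ext_restrict : (forall z, k z = None -> s z = z) -> ext restrict = s.
Proof.
move=> Hn; apply/permP => z; case ez: (k z) => [x|].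
  by rewrite -(kK ez) extE_j restrictE.
by rewrite extE_N // Hn.
Qed.
End Ext.
Lemma count_ge (T : finType) (s : {perm T}) x y : #|porbits s| <= (#|porbits (tperm x y * s)|).+1.
Proof. by have := count_le (tperm x y * s) x y; rewrite tpermKg. Qed.

Ltac neq := first [assumption | rewrite eq_sym; assumption].

Ltac tpe := repeat match goal with |- context [@fun_of_perm _ (@tperm _ ?x ?y) ?z] =>
  lazymatch z with
  | context [@tperm] => fail
  | _ => first [rewrite (@tpermL _ x y) | rewrite (@tpermR _ x y) |
                rewrite (@tpermD _ x y z); [ | neq | neq]]
  end end.

Ltac split_uniq U :=
  let H := fresh in have H := U; move: H; rewrite /= !inE !negb_or => H;
  repeat match goal with H : is_true (_ && _) |- _ => case/andP: H => ? ? end.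

Ltac notin := rewrite !inE !negb_or; repeat (apply/andP; split); neq.
Ltac isin := rewrite ?inE ?eqxx ?orbT.

Section Count.
Variables (T : finType) (a1 b1 c1 a2 b2 c2 dd dw p r : T) (R S sg P : {perm T}).
Local Notation D := [:: a1; b1; c1; a2; b2; c2].
Hypotheses (U1 : uniq [:: a1; b1; c1; a2; b2; c2; r; dw]) (U2 : uniq [:: a1; b1; c1; a2; b2; c2; p; dd]).
Hypotheses (Ra1 : R a1 = a2) (Rb1 : R b1 = b2) (Rc1 : R c1 = c2) (Rdw : R dw = dd) (Rr : R r = p)
  (RK : forall z, R (R z) = z).
Hypotheses (SD : forall z, z \in D -> S z = z) (Sdd : S dd = dd).
Hypotheses (sgp : sg p = c2) (sgc2 : sg c2 = S p)
  (sgo : forall w, w \notin D -> w != p -> w != dd -> sg w = S w).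
Hypotheses (PD : forall z, z \in D -> P z = z) (Po : forall z, z \notin D -> P z = S (R z)).

Lemma Ra2 : R a2 = a1. Proof. by rewrite -Ra1 RK. Qed.
Lemma Rb2 : R b2 = b1. Proof. by rewrite -Rb1 RK. Qed.
Lemma Rc2 : R c2 = c1. Proof. by rewrite -Rc1 RK. Qed.
Lemma Rdd : R dd = dw. Proof. by rewrite -Rdw RK. Qed.
Lemma Rp : R p = r. Proof. by rewrite -Rr RK. Qed.

Lemma Pr : P r = S p.
Proof. by split_uniq U1; rewrite Po ?Rr //; notin. Qed.
Lemma Pdw : P dw = dd.
Proof. by split_uniq U1; rewrite Po ?Rdw //; notin. Qed.

Lemma genR z : z \notin D -> z != r -> z != dw -> R z \notin D /\ R z != p /\ R z != dd.
Proof.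
move=> zD zr zdw; split; last split.
- apply: contra zD => /= h; rewrite -(RK z).
  move: h; rewrite !inE => /or4P[/eqP->|/eqP->|/eqP->|/orP[/eqP->|/orP[/eqP->|/eqP->]]];
  by rewrite ?Ra1 ?Rb1 ?Rc1 ?Ra2 ?Rb2 ?Rc2 ?inE eqxx ?orbT.
- by apply: contra zr => /eqP h; rewrite -(RK z) h Rp.
- by apply: contra zdw => /eqP h; rewrite -(RK z) h Rdd.
Qed.

Lemma count_V1W1 : sg a1 = b1 -> sg b1 = c1 -> sg c1 = a1 ->
  sg dd = a2 -> sg a2 = b2 -> sg b2 = dd ->
  #|porbits (R * sg)| + 6 = #|porbits P|.
Proof.
move=> s1 s2 s3 s4 s5 s6.
split_uniq U1.
have PDx : forall z, z \in D -> P z = z by [].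
have E : (R * sg)%g = (tperm b1 a2 * (tperm a2 dw * (tperm c1 b2 * (tperm b2 a1 *
            (tperm a1 c2 * (tperm c2 r * P))))))%g.
  apply/permP => z; rewrite !permM.
  case zD: (z \in D).
    move: zD; rewrite !inE => /or4P[/eqP->|/eqP->|/eqP->|/orP[/eqP->|/orP[/eqP->|/eqP->]]];
    tpe; rewrite ?Ra1 ?Rb1 ?Rc1 ?Ra2 ?Rb2 ?Rc2 ?Pr ?Pdw; rewrite ?PD //; by isin.
  have [->|zr] := eqVneq z r; first by tpe; rewrite Rr sgp PD //; isin.
  have [->|zdw] := eqVneq z dw; first by tpe; rewrite Rdw s4 PD //; isin.
  have zD' : z \notin D by rewrite zD.
  have [h1 [h2 h3]] := genR zD' zr zdw.
  have : z != a1 /\ z != b1 /\ z != c1 /\ z != a2 /\ z != b2 /\ z != c2.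
    by move: zD'; rewrite !inE !negb_or => /and3P[-> -> /and4P[-> -> -> ->]].
  case=> [? [? [? [? [? ?]]]]].
  by tpe; rewrite Po // sgo.
rewrite E.
have f1 : P c2 = c2 by rewrite PD //; isin.
have e1 := count_ins f1 (_ : c2 != r); rewrite -e1; last by neq.
have f2 : (tperm c2 r * P)%g a1 = a1 by rewrite permM; tpe; rewrite PD //; isin.
rewrite -(count_ins (y:=c2) f2); last by neq.
have f3 : (tperm a1 c2 * (tperm c2 r * P))%g b2 = b2 by rewrite !permM; tpe; rewrite PD //; isin.
rewrite -(count_ins (y:=a1) f3); last by neq.
have f4 : (tperm b2 a1 * (tperm a1 c2 * (tperm c2 r * P)))%g c1 = c1 by rewrite !permM; tpe; rewrite PD //; isin.
rewrite -(count_ins (y:=b2) f4); last by neq.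
have f5 : (tperm c1 b2 * (tperm b2 a1 * (tperm a1 c2 * (tperm c2 r * P))))%g a2 = a2 by rewrite !permM; tpe; rewrite PD //; isin.
rewrite -(count_ins (y:=dw) f5); last by neq.
have f6 : (tperm a2 dw * (tperm c1 b2 * (tperm b2 a1 * (tperm a1 c2 * (tperm c2 r * P)))))%g b1 = b1 by rewrite !permM; tpe; rewrite PD //; isin.
rewrite -(count_ins (y:=a2) f6); last by neq.
by rewrite !addnS addn0.
Qed.
Lemma count_V1W2 : sg a1 = b1 -> sg b1 = c1 -> sg c1 = a1 ->
  sg dd = b2 -> sg b2 = a2 -> sg a2 = dd ->
  #|porbits P| <= #|porbits (R * sg)| + 6.
Proof.
move=> s1 s2 s3 s4 s5 s6.
split_uniq U1.
have PDx : forall z, z \in D -> P z = z by [].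
have E : (R * sg)%g = (tperm a2 b1 * (tperm a1 c1 * (tperm c1 b2 * (tperm b2 dw *
            (tperm a1 c2 * (tperm c2 r * P))))))%g.
  apply/permP => z; rewrite !permM.
  case zD: (z \in D).
    move: zD; rewrite !inE => /or4P[/eqP->|/eqP->|/eqP->|/orP[/eqP->|/orP[/eqP->|/eqP->]]];
    tpe; rewrite ?Ra1 ?Rb1 ?Rc1 ?Ra2 ?Rb2 ?Rc2 ?Pr ?Pdw; rewrite ?PD //; by isin.
  have [->|zr] := eqVneq z r; first by tpe; rewrite Rr sgp PD //; isin.
  have [->|zdw] := eqVneq z dw; first by tpe; rewrite Rdw s4 PD //; isin.
  have zD' : z \notin D by rewrite zD.
  have [h1 [h2 h3]] := genR zD' zr zdw.
  have : z != a1 /\ z != b1 /\ z != c1 /\ z != a2 /\ z != b2 /\ z != c2.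
    by move: zD'; rewrite !inE !negb_or => /and3P[-> -> /and4P[-> -> -> ->]].
  case=> [? [? [? [? [? ?]]]]].
  by tpe; rewrite Po // sgo.
rewrite E.
have f1 : P c2 = c2 by rewrite PD //; isin.
have e1 := count_ins f1 (_ : c2 != r); rewrite -e1; last by neq.
have f2 : (tperm c2 r * P)%g a1 = a1 by rewrite permM; tpe; rewrite PD //; isin.
rewrite -(count_ins (y:=c2) f2); last by neq.
have f3 : (tperm a1 c2 * (tperm c2 r * P))%g b2 = b2 by rewrite !permM; tpe; rewrite PD //; isin.
rewrite -(count_ins (y:=dw) f3); last by neq.
have f4 : (tperm b2 dw * (tperm a1 c2 * (tperm c2 r * P)))%g c1 = c1 by rewrite !permM; tpe; rewrite PD //; isin.
rewrite -(count_ins (y:=b2) f4); last by neq.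
set P4 := (tperm c1 b2 * _)%g.
have g5 := count_ge P4 a1 c1.
have f6 : (tperm a1 c1 * P4)%g a2 = a2 by rewrite !permM; tpe; rewrite PD //; isin.
rewrite -(count_ins (y:=b1) f6) in g5; last by neq.
by move: g5; rewrite !addnS addn0 !ltnS.
Qed.
End Count.
Section Chains.
Variables (T : finType) (a1 b1 c1 a2 b2 c2 dd p : T).
Local Notation D := [:: a1; b1; c1; a2; b2; c2].
Hypothesis (U2 : uniq [:: a1; b1; c1; a2; b2; c2; p; dd]).

Lemma notD_neq w : w \notin D -> [/\ w != a1, w != b1, w != c1 & [/\ w != a2, w != b2 & w != c2]].
Proof. by rewrite !inE !negb_or => /and3P[-> -> /and4P[-> -> -> ->]]. Qed.

Lemma ins_chain (S : {perm T}) : (forall z, z \in D -> S z = z) -> S dd = dd ->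
  exists sg : {perm T},
  [/\ sg p = c2 /\ sg c2 = S p,
      (forall w, w \notin D -> w != p -> w != dd -> sg w = S w),
      sg a1 = b1 /\ sg b1 = c1 /\ sg c1 = a1,
      sg dd = a2 /\ sg a2 = b2 /\ sg b2 = dd &
      (forall z w, w \in porbit S z -> w \in porbit sg z)].
Proof.
move=> SD Sdd; split_uniq U2.
have [Sa1 Sb1 Sc1 Sa2 [Sb2 Sc2]] : [/\ S a1 = a1, S b1 = b1, S c1 = c1, S a2 = a2 & S b2 = b2 /\ S c2 = c2].
  by do ?split; apply: SD; isin.
exists (tperm b2 a2 * (tperm a2 dd * (tperm c1 b1 * (tperm b1 a1 * (tperm c2 p * S)))))%g.
split.
- by rewrite !permM; tpe; split; rewrite ?Sa1 ?Sb1 ?Sc1 ?Sa2 ?Sb2 ?Sc2 ?Sdd.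
- move=> w /notD_neq [? ? ? [? ? ?]] ? ?; by rewrite !permM; tpe.
- by rewrite !permM; tpe; (repeat split); rewrite ?Sa1 ?Sb1 ?Sc1 ?Sa2 ?Sb2 ?Sc2 ?Sdd.
- by rewrite !permM; tpe; (repeat split); rewrite ?Sa1 ?Sb1 ?Sc1 ?Sa2 ?Sb2 ?Sc2 ?Sdd.
- move=> z w h.
  apply: ins_orbit; first by rewrite !permM; tpe; rewrite ?Sa1 ?Sb1 ?Sc1 ?Sa2 ?Sb2 ?Sc2 ?Sdd.
  apply: ins_orbit; first by rewrite !permM; tpe; rewrite ?Sa1 ?Sb1 ?Sc1 ?Sa2 ?Sb2 ?Sc2 ?Sdd.
  apply: ins_orbit; first by rewrite !permM; tpe; rewrite ?Sa1 ?Sb1 ?Sc1 ?Sa2 ?Sb2 ?Sc2 ?Sdd.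
  apply: ins_orbit; first by rewrite !permM; tpe; rewrite ?Sa1 ?Sb1 ?Sc1 ?Sa2 ?Sb2 ?Sc2 ?Sdd.
  by apply: ins_orbit h.
Qed.

Lemma del_chain (sg : {perm T}) : sg p = c2 ->
  (sg a1 = b1 /\ sg b1 = c1 /\ sg c1 = a1) \/ (sg a1 = c1 /\ sg c1 = b1 /\ sg b1 = a1) ->
  (sg dd = a2 /\ sg a2 = b2 /\ sg b2 = dd) \/ (sg dd = b2 /\ sg b2 = a2 /\ sg a2 = dd) ->
  exists S : {perm T},
  [/\ (forall z, z \in D -> S z = z), S dd = dd, S p = sg c2,
      (forall w, w \notin D -> w != p -> w != dd -> S w = sg w) &
      (forall z w, z \notin D -> w \notin D -> w \in porbit sg z -> w \in porbit S z)].
Proof.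
move=> sgp hV hW; split_uniq U2.
have Hor : forall (x1 y1 x2 y2 x4 y4 x5 y5 : T),
   (tperm c2 p * sg)%g y1 = x1 -> (tperm x1 y1 * (tperm c2 p * sg))%g y2 = x2 ->
   (tperm x2 y2 * (tperm x1 y1 * (tperm c2 p * sg)))%g y4 = x4 ->
   (tperm x4 y4 * (tperm x2 y2 * (tperm x1 y1 * (tperm c2 p * sg))))%g y5 = x5 ->
   x1 \in D -> x2 \in D -> x4 \in D -> x5 \in D ->
   forall z w, z \notin D -> w \notin D -> w \in porbit sg z ->
   w \in porbit (tperm x5 y5 * (tperm x4 y4 * (tperm x2 y2 * (tperm x1 y1 * (tperm c2 p * sg)))))%g z.
  move=> x1 y1 x2 y2 x4 y4 x5 y5 e1 e2 e4 e5 i1 i2 i4 i5 z w zD wD h.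
  have ne : forall x, x \in D -> z != x /\ w != x.
    by move=> x xD; split; apply/negP => /eqP e; [move: zD | move: wD]; rewrite e xD.
  have [n1 m1] := ne _ i1; have [n2 m2] := ne _ i2; have [n4 m4] := ne _ i4; have [n5 m5] := ne _ i5.
  have [n0 m0] : z != c2 /\ w != c2 by apply: ne; isin.
  apply: del_orbit => //; apply: del_orbit => //; apply: del_orbit => //; apply: del_orbit => //.
  exact: del_orbit.
case: hV => [[v1 [v2 v3]]|[v1 [v2 v3]]]; case: hW => [[w1 [w2 w3]]|[w1 [w2 w3]]].
- exists (tperm b2 dd * (tperm a2 dd * (tperm c1 a1 * (tperm b1 a1 * (tperm c2 p * sg)))))%g.
  split.
  + move=> z; rewrite !inE => /or4P[/eqP->|/eqP->|/eqP->|/orP[/eqP->|/orP[/eqP->|/eqP->]]];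
    by rewrite !permM; tpe.
  + by rewrite !permM; tpe.
  + by rewrite !permM; tpe.
  + move=> w /notD_neq [? ? ? [? ? ?]] ? ?; by rewrite !permM; tpe.
  + apply: Hor; rewrite ?permM; tpe; by isin.
- exists (tperm a2 dd * (tperm b2 dd * (tperm c1 a1 * (tperm b1 a1 * (tperm c2 p * sg)))))%g.
  split.
  + move=> z; rewrite !inE => /or4P[/eqP->|/eqP->|/eqP->|/orP[/eqP->|/orP[/eqP->|/eqP->]]];
    by rewrite !permM; tpe.
  + by rewrite !permM; tpe.
  + by rewrite !permM; tpe.
  + move=> w /notD_neq [? ? ? [? ? ?]] ? ?; by rewrite !permM; tpe.
  + apply: Hor; rewrite ?permM; tpe; by isin.
- exists (tperm b2 dd * (tperm a2 dd * (tperm b1 a1 * (tperm c1 a1 * (tperm c2 p * sg)))))%g.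
  split.
  + move=> z; rewrite !inE => /or4P[/eqP->|/eqP->|/eqP->|/orP[/eqP->|/orP[/eqP->|/eqP->]]];
    by rewrite !permM; tpe.
  + by rewrite !permM; tpe.
  + by rewrite !permM; tpe.
  + move=> w /notD_neq [? ? ? [? ? ?]] ? ?; by rewrite !permM; tpe.
  + apply: Hor; rewrite ?permM; tpe; by isin.
- exists (tperm a2 dd * (tperm b2 dd * (tperm b1 a1 * (tperm c1 a1 * (tperm c2 p * sg)))))%g.
  split.
  + move=> z; rewrite !inE => /or4P[/eqP->|/eqP->|/eqP->|/orP[/eqP->|/orP[/eqP->|/eqP->]]];
    by rewrite !permM; tpe.
  + by rewrite !permM; tpe.
  + by rewrite !permM; tpe.
  + move=> w /notD_neq [? ? ? [? ? ?]] ? ?; by rewrite !permM; tpe.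
  + apply: Hor; rewrite ?permM; tpe; by isin.
Qed.
End Chains.
Lemma neq_of_e (E : finType) (x y : dart E) : x.1 != y.1 -> x != y.
Proof. by apply: contra => /eqP ->. Qed.
Lemma neq_of_dv (V E : finType) (ends : E -> V * V) (x y : dart E) :
  dvert ends x != dvert ends y -> x != y.
Proof. by apply: contra => /eqP ->. Qed.

Lemma half_step (x y : nat) : x <= y.+2 -> x./2 <= y./2 + 1.
Proof. by move=> h; apply: leq_trans (half_leq h) _; rewrite /= addn1. Qed.
Lemma half_eq (x y : nat) : x = y.+2 -> x./2 = y./2 + 1.
Proof. by move=> ->; rewrite /= addn1. Qed.

Lemma arith1 (nE nV nHE nHV F : nat) : nHV + 1 = nV -> nHE + 3 = nE -> F + nHV <= nHE + 2 ->
  ((nHE + 2) - (nHV + F))./2 + 1 <= ((nE + 2) - (nV + F))./2.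
Proof.
move=> h1 h2 h3; apply: eq_leq; apply/esym; apply: half_eq; lia.
Qed.

Lemma arith2 (nE nV nHE nHV FG FH : nat) : nHV + 1 = nV -> nHE + 3 = nE -> FH <= FG ->
  ((nE + 2) - (nV + FG))./2 <= ((nHE + 2) - (nHV + FH))./2 + 1.
Proof. move=> h1 h2 h3; apply: half_step; lia. Qed.

Lemma ar_pred (x y : nat) : x + 1 <= y -> x <= y.-1.
Proof. lia. Qed.
Lemma ar_fin (x y : nat) : x <= y.-1 -> 1 <= y -> x + 1 <= y.
Proof. lia. Qed.

Section Beta.
Variables (V E : finType) (ends : E -> V * V) (v v' : V) (a b c d : E) (u w : V).
Hypotheses (deg3 : forall x : V, 3 <= degree ends x) (nvv : v != v') (nab : a != b)
  (ea : edge_between ends a v v') (eb : edge_between ends b v v')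
  (dv3 : degree ends v = 3) (dv3' : degree ends v' = 3)
  (hc : (c != a) && (c != b)) (hu : (u != v) && (u != v')) (ec : edge_between ends c v u)
  (hd : (d != a) && (d != b)) (hw : (w != v) && (w != v')) (ed : edge_between ends d v' w).

Local Notation dv := (dvert ends).
Local Notation T := (dart E).

Definition dartat (e : E) (x : V) : T := (e, (ends e).1 != x).

Lemma dv_at e x y : edge_between ends e x y -> dv (dartat e x) = x /\ dv (drev (dartat e x)) = y.
Proof.
rewrite /edge_between /dartat /dvert /drev /=.
by case/orP => /eqP ->; case: eqP => //= ->.
Qed.

Lemma at_end e x y : edge_between ends e x y -> x != y ->
  forall z : T, z.1 = e -> (dv z == x) || (dv z == y).
Proof.
rewrite /edge_between /dvert => h _ [e' bb] /= ->.
by case/orP: h => /eqP ->; case: bb; rewrite eqxx ?orbT.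
Qed.

Let a1 := dartat a v. Let b1 := dartat b v. Let c1 := dartat c v.
Let a2 := drev a1. Let b2 := drev b1. Let c2 := drev c1.
Let dd := dartat d v'. Let dw := drev dd.

Lemma nuv : u != v. Proof. by case/andP: hu. Qed.
Lemma nuv' : u != v'. Proof. by case/andP: hu. Qed.
Lemma nwv : w != v. Proof. by case/andP: hw. Qed.
Lemma nwv' : w != v'. Proof. by case/andP: hw. Qed.
Lemma nca : c != a. Proof. by case/andP: hc. Qed.
Lemma ncb : c != b. Proof. by case/andP: hc. Qed.
Lemma nda : d != a. Proof. by case/andP: hd. Qed.
Lemma ndb : d != b. Proof. by case/andP: hd. Qed.
Lemma ndc : d != c.
Proof.
apply/eqP => edc.
have := at_end ed (_ : v' != w) (z := dartat c v) _; rewrite (dv_at ec).1.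
move=> /(_ _ _) /orP[]; first by rewrite eq_sym nwv'.
- by rewrite edc.
- by rewrite (negbTE nvv).
- by rewrite eq_sym (negbTE nwv).
Qed.

Lemma dva1 : dv a1 = v. Proof. exact: (dv_at ea).1. Qed.
Lemma dva2 : dv a2 = v'. Proof. exact: (dv_at ea).2. Qed.
Lemma dvb1 : dv b1 = v. Proof. exact: (dv_at eb).1. Qed.
Lemma dvb2 : dv b2 = v'. Proof. exact: (dv_at eb).2. Qed.
Lemma dvc1 : dv c1 = v. Proof. exact: (dv_at ec).1. Qed.
Lemma dvc2 : dv c2 = u. Proof. exact: (dv_at ec).2. Qed.
Lemma dvdd : dv dd = v'. Proof. exact: (dv_at ed).1. Qed.
Lemma dvdw : dv dw = w. Proof. exact: (dv_at ed).2. Qed.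

Lemma fiber3 (x0 : V) (x y z : T) : degree ends x0 = 3 -> uniq [:: x; y; z] ->
  dv x = x0 -> dv y = x0 -> dv z = x0 -> forall t, dv t = x0 -> t \in [:: x; y; z].
Proof.
move=> dg un ex ey ez t et.
have sub : [set t in [:: x; y; z]] \subset [set t | dv t == x0].
  by apply/subsetP => t'; rewrite !inE => /or3P[]/eqP->; rewrite ?ex ?ey ?ez.
have : [set t in [:: x; y; z]] == [set t | dv t == x0].
  have c3 : #|[set t in [:: x; y; z]]| = 3 by rewrite cardsE (card_uniqP un).
  by rewrite eqEcard sub c3 -dg; exact: leqnn.
by move/eqP/setP/(_ t); rewrite !inE et eqxx.
Qed.

Lemma uniq_v : uniq [:: a1; b1; c1].
Proof.
rewrite /= !inE !negb_or !andbT -!andbA; apply/and3P; split; apply: neq_of_e => //=.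
- by rewrite eq_sym nca.
- by rewrite eq_sym ncb.
Qed.

Lemma uniq_v' : uniq [:: a2; b2; dd].
Proof.
rewrite /= !inE !negb_or !andbT -!andbA; apply/and3P; split; apply: neq_of_e => //=.
- by rewrite eq_sym nda.
- by rewrite eq_sym ndb.
Qed.

Lemma fiber_v z : dv z = v -> z \in [:: a1; b1; c1].
Proof. move=> ez; exact: (fiber3 dv3 uniq_v dva1 dvb1 dvc1 ez). Qed.
Lemma fiber_v' z : dv z = v' -> z \in [:: a2; b2; dd].
Proof. move=> ez; exact: (fiber3 dv3' uniq_v' dva2 dvb2 dvdd ez). Qed.

Local Notation HE := (del_E ends v).
Local Notation endsH := (del_ends ends v).
Local Notation TH := (dart HE).
Local Notation D := [:: a1; b1; c1; a2; b2; c2].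

Definition jH (x : TH) : T := (val x.1, x.2).
Definition kH (z : T) : option TH := omap (fun e => (e, z.2)) (insub z.1 : option HE).

Lemma jK : pcancel jH kH.
Proof. by case=> e bb; rewrite /kH /jH /= valK. Qed.

Lemma kK z x : kH z = Some x -> jH x = z.
Proof.
rewrite /kH; case: insubP => [e _ ve|_] //= [<-]; rewrite /jH /= ve; by case: z {ve}.
Qed.

Lemma jH_drev x : jH (drev x) = drev (jH x). Proof. by case: x. Qed.

Lemma dvH x : val (dvert endsH x) = dv (jH x).
Proof. by case: x => [[e pe] []]. Qed.

Lemma darts_of (z : T) e0 x : z.1 = e0 -> z = dartat e0 x \/ z = drev (dartat e0 x).
Proof.
case: z => e bb /= ->; rewrite /dartat /drev /=.
by case: bb; case: (_ != x); [left|right|right|left].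
Qed.

Lemma incident_abc e : ~~ (((ends e).1 != v) && ((ends e).2 != v)) -> e \in [:: a; b; c].
Proof.
rewrite negb_and !negbK => h.
have := fiber_v (dart_at_end h); rewrite !inE /dartat => /or3P[]/eqP[->];
by rewrite eqxx ?orbT.
Qed.

Lemma abc_incident e : e \in [:: a; b; c] -> ~~ (((ends e).1 != v) && ((ends e).2 != v)).
Proof.
rewrite negb_and !negbK !inE => /or3P[]/eqP->.
- by case/orP: ea => /eqP ->; rewrite eqxx ?orbT.
- by case/orP: eb => /eqP ->; rewrite eqxx ?orbT.
- by case/orP: ec => /eqP ->; rewrite eqxx ?orbT.
Qed.

Lemma mem_D z : (z \in D) = (z.1 \in [:: a; b; c]).
Proof.
apply/idP/idP.
  by rewrite !inE => /or4P[/eqP->|/eqP->|/eqP->|/orP[/eqP->|/orP[/eqP->|/eqP->]]]; rewrite /= eqxx ?orbT.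
rewrite !inE => /or3P[]/eqP e1.
- by case: (darts_of v e1) => ->; rewrite eqxx ?orbT.
- by case: (darts_of v e1) => ->; rewrite eqxx ?orbT.
- by case: (darts_of v e1) => ->; rewrite eqxx ?orbT.
Qed.

Lemma kN z : (kH z == None) = (z \in D).
Proof.
rewrite mem_D /kH; case: insubP => [e pe _|npe] /=.
  by apply/esym/negbTE; apply: contraL pe => /abc_incident.
by rewrite (incident_abc npe).
Qed.

Lemma drevK (x : T) : drev (drev x) = x. Proof. by case: x => ? []. Qed.
Lemma e_a1 : a1.1 = a. Proof. by []. Qed.
Lemma e_a2 : a2.1 = a. Proof. by []. Qed.
Lemma e_b1 : b1.1 = b. Proof. by []. Qed.
Lemma e_b2 : b2.1 = b. Proof. by []. Qed.
Lemma e_c1 : c1.1 = c. Proof. by []. Qed.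
Lemma e_c2 : c2.1 = c. Proof. by []. Qed.
Lemma e_dd : dd.1 = d. Proof. by []. Qed.
Lemma e_dw : dw.1 = d. Proof. by []. Qed.
Lemma e_drev (x : T) : (drev x).1 = x.1. Proof. by []. Qed.

Ltac dneq_base :=
  have := nab; have := nca; have := ncb; have := nda; have := ndb; have := ndc;
  have := nvv; have := nuv; have := nuv'; move=> *.

Ltac dneq := first [
  apply: neq_of_e; rewrite ?e_a1 ?e_a2 ?e_b1 ?e_b2 ?e_c1 ?e_c2 ?e_dd ?e_dw ?e_drev; neq
| apply: (@neq_of_dv _ _ ends); rewrite ?dva1 ?dva2 ?dvb1 ?dvb2 ?dvc1 ?dvc2 ?dvdd ?dvdw; neq
| neq ].

Section WithP.
Variable p : T.
Hypotheses (pD : p \notin D) (dvp : dv p = u).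

Lemma p_facts : [/\ p.1 != a, p.1 != b, p.1 != c, p != dd & drev p != dw].
Proof.
have : p.1 \notin [:: a; b; c] by rewrite -mem_D.
rewrite !inE !negb_or => /and3P[h1 h2 h3]; split => //.
- by apply: (@neq_of_dv _ _ ends); rewrite dvp dvdd nuv'.
- apply: contraNneq nuv' => e.
  have epd : p = dd by rewrite -[p]drevK e /dw drevK.
  by rewrite -dvp epd dvdd.
Qed.

Lemma U1 : uniq [:: a1; b1; c1; a2; b2; c2; drev p; dw].
Proof.
have [? ? ? ? ?] := p_facts; dneq_base.
rewrite /= !inE !negb_or !andbT; repeat (apply/andP; split); dneq.
Qed.
Lemma U2 : uniq [:: a1; b1; c1; a2; b2; c2; p; dd].
Proof.
have [? ? ? ? ?] := p_facts; dneq_base.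
rewrite /= !inE !negb_or !andbT; repeat (apply/andP; split); dneq.
Qed.

Lemma U1s : uniq [:: b1; a1; c1; b2; a2; c2; drev p; dw].
Proof.
have [? ? ? ? ?] := p_facts; dneq_base.
rewrite /= !inE !negb_or !andbT; repeat (apply/andP; split); dneq.
Qed.

Lemma U2s : uniq [:: b1; a1; c1; b2; a2; c2; p; dd].
Proof.
have [? ? ? ? ?] := p_facts; dneq_base.
rewrite /= !inE !negb_or !andbT; repeat (apply/andP; split); dneq.
Qed.
End WithP.

Lemma memDs z : (z \in [:: b1; a1; c1; b2; a2; c2]) = (z \in D).
Proof.
rewrite !inE; case: (z == a1); case: (z == b1); case: (z == a2); case: (z == b2); by rewrite ?orbT.
Qed.


Definition extH := ext jK kK.

Lemma jH_notD x : jH x \notin D. Proof. by rewrite -kN jK. Qed.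

Lemma notD_j t : t \notin D -> exists x, t = jH x.
Proof.
move=> tD; case e: (kH t) => [x|]; first by exists x; rewrite (kK e).
by move: tD; rewrite -kN e.
Qed.

Lemma dd_notD : dd \notin D.
Proof. by rewrite mem_D e_dd !inE !negb_or nda ndb ndc. Qed.

Lemma D_dv z : z \in D -> z != c2 -> (dv z == v) || (dv z == v').
Proof.
rewrite !inE => /or4P[/eqP->|/eqP->|/eqP->|/orP[/eqP->|/orP[/eqP->|/eqP->]]];
by rewrite ?dva1 ?dvb1 ?dvc1 ?dva2 ?dvb2 ?eqxx ?orbT.
Qed.

Lemma notD_at_u z : dv z = u -> z != c2 -> z \notin D.
Proof.
move=> ez nz; apply/negP => /D_dv /(_ nz); rewrite ez.
by rewrite (negbTE nuv) (negbTE nuv').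
Qed.

Lemma same_orbit (s : {perm T}) x y z : y \in porbit s x -> z \in porbit s x -> z \in porbit s y.
Proof. by rewrite porbit_sym => h1 h2; apply: porbit_trans h1 h2. Qed.

Lemma S_facts (sgH : {perm TH}) : is_rotation endsH sgH ->
  [/\ (forall z, z \in D -> extH sgH z = z), (forall z, dv (extH sgH z) = dv z),
      extH sgH dd = dd &
      (forall t t', t \notin D -> t' \notin D -> dv t = dv t' -> t' \in porbit (extH sgH) t)].
Proof.
case/rotP => H1 H2.
have SD : forall z, z \in D -> extH sgH z = z.
  by move=> z zD; apply: extE_N; apply/eqP; rewrite kN.
have Sdv : forall z, dv (extH sgH z) = dv z.
  move=> z; case zD: (z \in D); first by rewrite SD.
  have [x ->] := notD_j (negbT zD).
  by rewrite /extH extE_j -!dvH H1.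
split => //.
- have [x ex] := notD_j dd_notD.
  have h : extH sgH dd \in [:: a2; b2; dd] by apply: fiber_v'; rewrite Sdv dvdd.
  have : extH sgH dd \notin D by rewrite ex /extH extE_j jH_notD.
  by move: h; rewrite !inE => /or3P[]/eqP ->; rewrite ?inE ?eqxx ?orbT.
- move=> t t' tD t'D; have [x ->] := notD_j tD; have [x' ->] := notD_j t'D => et.
  by rewrite /extH porbit_ext; apply: H2; apply: val_inj; rewrite !dvH.
Qed.

Lemma exists_p : exists p, dv p = u /\ p != c2.
Proof.
have h := deg3 u; rewrite /degree (cardsD1 c2) in h.
have : 0 < #|[set z : T | dv z == u] :\ c2|.
  by rewrite lt0n; apply/eqP => n0; move: h; rewrite n0; case: (_ \in _).
case/card_gt0P => z; rewrite !inE => /andP[nz /eqP ez]; by exists z.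
Qed.

Lemma in3 (s : {perm T}) x y z : s x = y -> s y = z -> forall t, t \in [:: x; y; z] -> t \in porbit s x.
Proof.
move=> e1 e2 t; rewrite !inE => /or3P[]/eqP->; first exact: porbit_id.
  by rewrite -e1 porbit_step.
by apply: porbit_trans (_ : y \in porbit s x) _; rewrite -?e1 ?porbit_step // -e2 -e1 porbit_step.
Qed.

Lemma cardNone : #|[set z | kH z == None]| = 6.
Proof.
have [p [pu pc2]] := exists_p.
have := U1 (notD_at_u pu pc2) pu.
rewrite -[[:: a1; b1; c1; a2; b2; c2; drev p; dw]]/(D ++ [:: drev p; dw]) cat_uniq => /and3P[uD _ _].
rewrite -[6]/(size D) -(card_uniqP uD); apply: eq_card => z; by rewrite inE kN.
Qed.

Lemma LB (sgH : {perm TH}) : is_rotation endsH sgH ->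
  exists2 sg : {perm T}, is_rotation ends sg &
    #|porbits (drev_perm E * sg)| = #|porbits (drev_perm HE * sgH)|.
Proof.
move=> rH; have [SD Sdv Sdd Sorb] := S_facts rH.
have [p [pu pc2]] := exists_p.
have pD := notD_at_u pu pc2.
have [sg [[sgp sgc2] sgo [s1 [s2 s3]] [s4 [s5 s6]] sgorb]] := ins_chain (U2 pD pu) SD Sdd.
exists sg.
  apply/andP; split; apply/forallP.
    move=> z; apply/eqP; case zD: (z \in D).
      move: zD; rewrite !inE => /or4P[/eqP->|/eqP->|/eqP->|/orP[/eqP->|/orP[/eqP->|/eqP->]]];
      by rewrite ?s1 ?s2 ?s3 ?s5 ?s6 ?sgc2 ?Sdv ?pu ?dva1 ?dvb1 ?dvc1 ?dva2 ?dvb2 ?dvc2 ?dvdd.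
    have [->|zp] := eqVneq z p; first by rewrite sgp dvc2 pu.
    have [->|zdd] := eqVneq z dd; first by rewrite s4 dva2 dvdd.
    by rewrite sgo ?zD // Sdv.
  move=> z; apply/forallP => z'; apply/implyP => /eqP ez.
  have [xv|nxv] := eqVneq (dv z) v.
    have hz := fiber_v xv; have hz' : z' \in [:: a1; b1; c1] by apply: fiber_v; rewrite -ez.
    exact: same_orbit (in3 s1 s2 hz) (in3 s1 s2 hz').
  have [xv'|nxv'] := eqVneq (dv z) v'.
    have hz := fiber_v' xv'; have hz' : z' \in [:: a2; b2; dd] by apply: fiber_v'; rewrite -ez.
    have g : forall t, t \in [:: a2; b2; dd] -> t \in [:: dd; a2; b2].
      by move=> t; rewrite !inE => /or3P[]->; rewrite ?orbT.
    exact: same_orbit (in3 s4 s5 (g _ hz)) (in3 s4 s5 (g _ hz')).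
  have nD : forall t, dv t = dv z -> t != c2 -> t \notin D.
    move=> t et nt; apply/negP => /D_dv /(_ nt); rewrite et.
    by rewrite (negbTE nxv) (negbTE nxv').
  have cA : forall t t', t \notin D -> t' \notin D -> dv t = dv t' -> t' \in porbit sg t.
    by move=> t t' tD t'D e; apply: sgorb; apply: Sorb.
  have c2p : c2 \in porbit sg p by rewrite -sgp porbit_step.
  have [zc|zc] := eqVneq z c2; have [z'c|z'c] := eqVneq z' c2.
  - by rewrite zc z'c porbit_id.
  - rewrite zc; apply: same_orbit c2p _; apply: cA => //.
      by apply: nD z'c; rewrite -ez.
    by rewrite pu -ez zc dvc2.
  - rewrite z'c; apply: porbit_trans (cA _ _ (nD _ erefl zc) pD _) c2p.
    by rewrite pu -dvc2 -z'c -ez.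
  - by apply: cA; [exact: nD | apply: nD z'c; rewrite -ez | ].
have Po : forall z, z \notin D -> extH (drev_perm HE * sgH)%g z = extH sgH (drev_perm E z).
  move=> z zD; have [x ->] := notD_j zD.
  rewrite /extH; apply: (etrans (extE_j jK kK _ x)); by rewrite permM !permE -jH_drev /ext_fun jK.
have PD : forall z, z \in D -> extH (drev_perm HE * sgH)%g z = z.
  by move=> z zD; apply: extE_N; apply/eqP; rewrite kN.
have RK : forall z, drev_perm E (drev_perm E z) = z by move=> z; rewrite !permE drevK.
have := count_V1W1 (U1 pD pu) (R := drev_perm E) _ _ _ _ _ RK Sdd sgp sgc2 sgo PD Po s1 s2 s3 s4 s5 s6.
rewrite /extH ext_count cardNone => h.
by apply/eqP; rewrite -(eqn_add2r 6) h ?permE ?drevK.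
Qed.

Lemma three (s : {perm T}) x y z : uniq [:: x; y; z] ->
  s x \in [:: x; y; z] -> s y \in [:: x; y; z] -> s z \in [:: x; y; z] ->
  s x != x -> s y != y -> s z != z ->
  (s x = y /\ s y = z /\ s z = x) \/ (s x = z /\ s z = y /\ s y = x).
Proof.
move=> U hx hy hz nx ny nz; move: U; rewrite /= !inE !negb_or !andbT => /andP[/andP[nxy nxz] nyz].
move: hx hy hz; rewrite !inE.
case/or3P => /eqP ex; case/or3P => /eqP ey; case/or3P => /eqP ez;
first [ by left | by right
      | by rewrite ex eqxx in nx | by rewrite ey eqxx in ny | by rewrite ez eqxx in nz
      | by have e := perm_inj (etrans ex (esym ey)); rewrite e eqxx in nxy
      | by have e := perm_inj (etrans ex (esym ez)); rewrite e eqxx in nxz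
      | by have e := perm_inj (etrans ey (esym ez)); rewrite e eqxx in nyz ].
Qed.

Lemma rot_nofix (s : {perm T}) x y : is_rotation ends s -> dv x = dv y -> x != y -> s x != x.
Proof.
case/rotP => _ R2 exy nxy; apply/eqP => sx.
by have := porbit_fixed sx (R2 _ _ exy); move/eqP; rewrite eq_sym (negbTE nxy).
Qed.

Lemma UB (sg : {perm T}) : is_rotation ends sg ->
  exists2 sgH : {perm TH}, is_rotation endsH sgH &
    #|porbits (drev_perm HE * sgH)| <= #|porbits (drev_perm E * sg)|.
Proof.
move=> rs; case/rotP: (rs) => R1 R2.
have [q [qu qc2]] := exists_p.
pose p := (sg^-1)%g c2.
have sgp : sg p = c2 by rewrite /p permKV.
have pu : dv p = u by rewrite -R1 sgp dvc2.
have pc2 : p != c2.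
  apply/eqP => e.
  have h : sg c2 != c2 by apply: (rot_nofix (y:=q) rs); [rewrite qu dvc2 | rewrite eq_sym].
  by rewrite -{1}e sgp eqxx in h.
have pD := notD_at_u pu pc2.
have [n1 n2 n3] : [/\ a1 != b1, a1 != c1 & b1 != c1].
  by move: uniq_v; rewrite /= !inE !negb_or !andbT => /andP[/andP[-> ->] ->].
have [m1 m2 m3] : [/\ a2 != b2, a2 != dd & b2 != dd].
  by move: uniq_v'; rewrite /= !inE !negb_or !andbT => /andP[/andP[-> ->] ->].
have hV : (sg a1 = b1 /\ sg b1 = c1 /\ sg c1 = a1) \/ (sg a1 = c1 /\ sg c1 = b1 /\ sg b1 = a1).
  apply: three uniq_v _ _ _ _ _ _; try (apply: fiber_v; rewrite R1 ?dva1 ?dvb1 ?dvc1 //).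
  - by apply: (rot_nofix (y:=b1) rs); rewrite ?dva1 ?dvb1.
  - by apply: (rot_nofix (y:=a1) rs); rewrite ?dva1 ?dvb1 // eq_sym.
  - by apply: (rot_nofix (y:=a1) rs); rewrite ?dva1 ?dvc1 // eq_sym.
have g : forall t, t \in [:: a2; b2; dd] -> t \in [:: dd; a2; b2].
  by move=> t; rewrite !inE => /or3P[]->; rewrite ?orbT.
have hW : (sg dd = a2 /\ sg a2 = b2 /\ sg b2 = dd) \/ (sg dd = b2 /\ sg b2 = a2 /\ sg a2 = dd).
  apply: three _ _ _ _ _ _ _; try (apply: g; apply: fiber_v'; rewrite R1 ?dva2 ?dvb2 ?dvdd //).
  - by rewrite /= !inE !negb_or !andbT eq_sym m2 eq_sym m3 m1.
  - by apply: (rot_nofix (y:=a2) rs); rewrite ?dva2 ?dvdd // eq_sym.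
  - by apply: (rot_nofix (y:=dd) rs); rewrite ?dva2 ?dvdd.
  - by apply: (rot_nofix (y:=dd) rs); rewrite ?dvb2 ?dvdd.
have [S [SD Sdd Sp So Sorb]] := del_chain (U2 pD pu) sgp hV hW.
have Hs : forall x, kH (S (jH x)) != None.
  move=> x; rewrite kN; apply/negP => h; have e := perm_inj (SD _ h).
  by rewrite e in h; have := jH_notD x; rewrite h.
pose sgH := restrict jK kK Hs.
have exS : extH sgH = S.
  by apply: ext_restrict => z hz; apply: SD; rewrite -kN hz.
have sgHE : forall x, jH (sgH x) = S (jH x) by exact: (restrictE jK kK Hs).
clearbody sgH.
have Sdv : forall z, dv (S z) = dv z.
  move=> z; case zD: (z \in D); first by rewrite SD.
  have [->|zp] := eqVneq z p; first by rewrite Sp R1 dvc2 pu.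
  have [->|zdd] := eqVneq z dd; first by rewrite Sdd.
  by rewrite So ?zD // R1.
exists sgH.
  apply/andP; split; apply/forallP.
    move=> x; apply/eqP; apply: val_inj; rewrite !dvH.
    by rewrite sgHE Sdv.
  move=> x; apply/forallP => x'; apply/implyP => /eqP ex.
  rewrite -(porbit_ext jK kK); change (ext jK kK sgH) with (extH sgH); rewrite exS.
  apply: Sorb; rewrite ?jH_notD //; apply: R2.
  by rewrite -!dvH ex.
have Po : forall z, z \notin D -> extH (drev_perm HE * sgH)%g z = S (drev_perm E z).
  move=> z zD; have [x ->] := notD_j zD; rewrite -exS.
  rewrite /extH; apply: (etrans (extE_j jK kK _ x)); by rewrite permM !permE -jH_drev /ext_fun jK.
have PD : forall z, z \in D -> extH (drev_perm HE * sgH)%g z = z.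
  by move=> z zD; apply: extE_N; apply/eqP; rewrite kN.
have RK : forall z, drev_perm E (drev_perm E z) = z by move=> z; rewrite !permE drevK.
have sgo : forall t, t \notin D -> t != p -> t != dd -> sg t = S t.
  by move=> t h1 h2 h3; rewrite So.
have sgc2 : sg c2 = S p by rewrite Sp.
have sgos : forall t, t \notin [:: b1; a1; c1; b2; a2; c2] -> t != p -> t != dd -> sg t = S t.
  by move=> t; rewrite memDs; apply: sgo.
have PDs : forall z, z \in [:: b1; a1; c1; b2; a2; c2] -> extH (drev_perm HE * sgH)%g z = z.
  by move=> z; rewrite memDs; apply: PD.
have Pos : forall z, z \notin [:: b1; a1; c1; b2; a2; c2] -> extH (drev_perm HE * sgH)%g z = S (drev_perm E z).
  by move=> z; rewrite memDs; apply: Po.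
have cnt : #|porbits (extH (drev_perm HE * sgH)%g)| = #|porbits (drev_perm HE * sgH)| + 6.
  by rewrite /extH ext_count cardNone.
rewrite -(leq_add2r 6) -cnt.
case: hV => [[v1 [v2 v3]]|[v1 [v2 v3]]]; case: hW => [[w1 [w2 w3]]|[w1 [w2 w3]]].
- by rewrite -(count_V1W1 (U1 pD pu) (R := drev_perm E) _ _ _ _ _ RK Sdd sgp sgc2 sgo PD Po v1 v2 v3 w1 w2 w3) ?permE ?drevK.
- by apply: (count_V1W2 (U1 pD pu) (R := drev_perm E) _ _ _ _ _ RK Sdd sgp sgc2 sgo PD Po v1 v2 v3 w1 w2 w3); rewrite ?permE ?drevK.
- by apply: (count_V1W2 (U1s pD pu) (R := drev_perm E) _ _ _ _ _ RK Sdd sgp sgc2 sgos PDs Pos v3 v1 v2 w1 w2 w3); rewrite ?permE ?drevK.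
- by rewrite -(count_V1W1 (U1s pD pu) (R := drev_perm E) _ _ _ _ _ RK Sdd sgp sgc2 sgos PDs Pos v3 v1 v2 w1 w2 w3) ?permE ?drevK.
Qed.

Local Notation HV := (del_V v).

Lemma cardHV : #|{: HV}| + 1 = #|V|.
Proof.
rewrite card_sig (eq_card (B := predC1 v)) ?cardC1; last by move=> x; rewrite !inE.
by rewrite addn1 prednK //; apply/card_gt0P; exists v.
Qed.

Lemma cardHE : #|{: HE}| + 3 = #|E|.
Proof.
have u3 : uniq [:: a; b; c] by rewrite /= !inE !negb_or nab eq_sym nca eq_sym ncb.
rewrite card_sig -(cardC (mem [:: a; b; c])) (card_uniqP u3) addnC.
congr (_ + _); apply: eq_card => e.
rewrite (_ : (e \in [predC mem [:: a; b; c]]) = (e \notin [:: a; b; c])) //.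
rewrite [in LHS]inE /=.
case h: (((ends e).1 != v) && ((ends e).2 != v)).
  by apply/esym/negP => /abc_incident; rewrite h.
by have := incident_abc (negbT h) => ->.
Qed.

Lemma HV0 : 0 < #|{: HV}|.
Proof. have h : v' != v by rewrite eq_sym. by apply/card_gt0P; exists (exist _ v' h). Qed.

Lemma facesG (sg : {perm T}) : nfaces sg = #|porbits (drev_perm E * sg)|.
Proof.
rewrite /nfaces (_ : (#|{: T}| == 0) = false) ?addn0 //.
by apply/negbTE; rewrite -lt0n; apply/card_gt0P; exists a1.
Qed.

Lemma facesH (sgH : {perm TH}) : nfaces sgH = #|porbits (drev_perm HE * sgH)|.
Proof.
rewrite /nfaces (_ : (#|{: TH}| == 0) = false) ?addn0 //.
have [x _] := notD_j dd_notD.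
by apply/negbTE; rewrite -lt0n; apply/card_gt0P; exists x.
Qed.

Lemma main_eq : connected_graph endsH -> max_genus endsH + 1 = max_genus ends.
Proof.
move=> connH.
have cV := cardHV; have cE := cardHE.
have key : forall sgH, is_rotation endsH sgH -> emb_genus HV sgH + 1 <= max_genus ends.
  move=> sgH rH; have [sg rs cnt] := LB rH.
  apply: leq_trans (leq_bigmax_cond _ rs).
  rewrite /emb_genus (facesG sg) (facesH sgH) cnt.
  have eu := euler_le connH rH HV0.
  exact: (arith1 cV cE eu).
have [s0 r0] := rot_exists endsH.
have G1 : 1 <= max_genus ends by apply: leq_trans (key _ r0); rewrite addn1.
apply/eqP; rewrite eqn_leq; apply/andP; split.
  have : max_genus endsH <= (max_genus ends).-1.
    by apply/bigmax_leqP => s rs; apply: ar_pred (key s rs).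
  by move=> h; apply: ar_fin h G1.
apply/bigmax_leqP => sg rs.
have [sgH rH cnt] := UB rs.
apply: leq_trans (_ : emb_genus HV sgH + 1 <= _); last by rewrite leq_add2r; exact: leq_bigmax_cond.
rewrite /emb_genus (facesG sg) (facesH sgH).
exact: (arith2 cV cE cnt).
Qed.

End Beta.

Unset Implicit Arguments.
Theorem theorem2p1 (V E : finType) (ends : E -> V * V) (v v' : V) (a b : E) :
  connected_graph ends ->
  (forall x : V, 3 <= degree ends x) ->
  v != v' ->
  a != b ->
  edge_between ends a v v' ->
  edge_between ends b v v' ->
  (forall e : E, edge_between ends e v v' -> e = a \/ e = b) ->
  degree ends v = 3 ->
  degree ends v' = 3 ->
  (exists2 e : E, (e != a) && (e != b) &
     [exists w : V, (w != v) && (w != v') && edge_between ends e v w]) ->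
  (exists2 e : E, (e != a) && (e != b) &
     [exists w : V, (w != v) && (w != v') && edge_between ends e v' w]) ->
  connected_graph (del_ends ends v) ->
  max_genus (del_ends ends v) + 1 = max_genus ends.
Proof.
move=> conn deg3 nvv nab ea eb eab dv3 dv3' [c hc /existsP[u /andP[hu ec]]]
  [d hd /existsP[w /andP[hw ed]]] connH.
exact: (main_eq deg3 nvv nab ea eb dv3 dv3' hc hu ec hd hw ed connH).
Qed.
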